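(* Suppose Assumption A holds and $F$ is $K$-convex. Let $\{x^k\}$ be an infinite sequence generated by Algorithm 1 with $G_k\in\mathcal{S}_{\ell,\mu}(F,x^k)$ for all $k$, where $\ell\preceq_K\mu$. Then: (i) $\{x^k\}$ converges to a weakly efficient solution $x^*$ of $\min_K F(x)$; (ii) $u_0(x^k)\le\frac{\ell_{\max}R^2}{2k}$ for all $k\ge1$, where $\ell_{\max}:=\max_{c^*\in C}\langle c^*,\ell\rangle$, $R:=\sup\{\|x-y\|:x,y\in\mathcal{L}_F(x^0)\}$, and $u_0(x):=\max_{z\in\mathbb{R}^n}\min_{c^*\in C}\langle c^*,F(x)-F(z)\rangle$.
   Context: $K\subset\mathbb{R}^m$ is a closed, convex, pointed cone with nonempty interior; $y\preceq_K y'$ iff $y'-y\in K$, $y\prec_K y'$ iff $y'-y\in\mathrm{int}(K)$. $K^*=\{c:\langle c,y\rangle\ge0\ \forall y\in K\}$; $C$ is a compact convex set with $0\notin C$, $\mathrm{cone}(C)=K^*$. $F:\mathbb{R}^n\to\mathbb{R}^m$ differentiable with Jacobian $JF$. $K$-convex: $JF(x)(y-x)\preceq_K F(y)-F(x)$ for all $x,y$. $x^*$ is weakly efficient if there is no $x$ with $F(x)\prec_K F(x^* )$; $K$-stationary if $\mathrm{range}(JF(x^* ))\cap(-\mathrm{int}(K))=\emptyset$. For differentiable $\Phi$: strongly $K$-convex with $\mu\in K$ means $J\Phi(x)(y-x)+\tfrac12\|y-x\|^2\mu\preceq_K\Phi(y)-\Phi(x)$ $\forall x,y$; $K$-smooth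 with $\ell\in K$ means $\Phi(y)-\Phi(x)\preceq_K J\Phi(x)(y-x)+\tfrac12\|y-x\|^2\ell$ $\forall x,y$. Surrogate class $\mathcal{S}_{\ell,\mu}(F,x^k)$ ($\ell\in K,\mu\in\mathrm{int}(K)$): differentiable $G_k$ strongly $K$-convex with $\mu$ such that, with $x^{k+1}$ the minimizer of $x\mapsto\max_{c^*\in C}\langle c^*,G_k(x)\rangle$ and $H_k:=G_k-F+F(x^k)$: $F(x^{k+1})-F(x^k)\preceq_K G_k(x^{k+1})$; $H_k$ is $K$-smooth with $\ell$, $H_k(x^k)=0$, $JH_k(x^k)=0$. Algorithm 1: from $x^0$, choose $G_k\in\mathcal{S}_{\ell,\mu}(F,x^k)$, set $x^{k+1}:=\arg\min_x\max_{c^*\in C}\langle c^*,G_k(x)\rangle$, stop if $x^{k+1}=x^k$. Assumption A: (i) $\mathcal{L}_F(x^0)=\{x:F(x)\preceq_K F(x^0)\}$ is bounded; (ii) whenever $x^k\to x^*$ along an infinite index set $\mathcal{K}$, $G_k\in\mathcal{S}_{\ell,\mu}(F,x^k)$ and $\max_{c^*\in C}\langle c^*,G_k(x^{k+1})\rangle\to0$ along $\mathcal{K}$, $x^*$ is $K$-stationary. *)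

(* Defs.v *)
From HB Require Import structures.
From mathcomp Require Import all_boot all_order all_algebra.
From mathcomp Require Import all_classical all_reals all_analysis.
Set Implicit Arguments. Unset Strict Implicit. Unset Printing Implicit Defensive.
Import Order.TTheory GRing.Theory Num.Theory.
Import numFieldNormedType.Exports.
Local Open Scope classical_set_scope.
Local Open Scope ring_scope.

Section Defs.
Variable R : realType.

Definition dotv (p : nat) (u v : 'rV[R]_p) : R := \sum_(i < p) u ord0 i * v ord0 i.
Definition enorm (p : nat) (v : 'rV[R]_p) : R := Num.sqrt (dotv v v).

Definition convexS (p : nat) (A : set 'rV[R]_p) :=
  forall x y (t : R), A x -> A y -> 0 <= t -> t <= 1 -> A (t *: x + (1 - t) *: y).

Definition proper_cone (m : nat) (K : set 'rV[R]_m) :=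
  closed K /\ K 0 /\ (forall y (t : R), K y -> 0 <= t -> K (t *: y)) /\
  (forall y z, K y -> K z -> K (y + z)) /\
  (forall y, K y -> K (- y) -> y = 0) /\ (interior K !=set0).

Definition leK (m : nat) (K : set 'rV[R]_m) (y y' : 'rV[R]_m) := K (y' - y).
Definition ltK (m : nat) (K : set 'rV[R]_m) (y y' : 'rV[R]_m) := interior K (y' - y).

Definition dual_cone (m : nat) (K : set 'rV[R]_m) : set 'rV[R]_m :=
  [set c | forall y, K y -> 0 <= dotv c y].

Definition cone_of (m : nat) (C : set 'rV[R]_m) : set 'rV[R]_m :=
  [set y | exists t, 0 <= t /\ exists2 c, C c & y = t *: c].

(* max_{c in C} <c, y>  (C compact, so the sup is attained) *)
Definition phiC (m : nat) (C : set 'rV[R]_m) (y : 'rV[R]_m) : R :=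
  sup [set dotv c y | c in C].

Definition K_convex (n m : nat) (K : set 'rV[R]_m) (F : 'rV[R]_n -> 'rV[R]_m) :=
  forall x y, leK K ('d F x (y - x)) (F y - F x).

Definition strongly_K_convex (n m : nat) (K : set 'rV[R]_m)
    (Phi : 'rV[R]_n -> 'rV[R]_m) (mu : 'rV[R]_m) :=
  forall x y, leK K ('d Phi x (y - x) + (2^-1 * enorm (y - x) ^+ 2) *: mu)
                    (Phi y - Phi x).

Definition K_smooth (n m : nat) (K : set 'rV[R]_m)
    (Phi : 'rV[R]_n -> 'rV[R]_m) (l : 'rV[R]_m) :=
  forall x y, leK K (Phi y - Phi x)
                    ('d Phi x (y - x) + (2^-1 * enorm (y - x) ^+ 2) *: l).

Definition is_argmin_phi (n m : nat) (C : set 'rV[R]_m)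
    (G : 'rV[R]_n -> 'rV[R]_m) (z : 'rV[R]_n) :=
  forall x, phiC C (G z) <= phiC C (G x).

Definition surrogate (n m : nat) (K : set 'rV[R]_m) (C : set 'rV[R]_m)
    (l mu : 'rV[R]_m) (F : 'rV[R]_n -> 'rV[R]_m) (xk : 'rV[R]_n)
    (G : 'rV[R]_n -> 'rV[R]_m) :=
  let H := fun z => G z - F z + F xk in
  (forall x, differentiable G x) /\
  strongly_K_convex K G mu /\
  (forall xnext, is_argmin_phi C G xnext ->
                 leK K (F xnext - F xk) (G xnext)) /\
  K_smooth K H l /\
  H xk = 0 /\
  (forall v, 'd H xk v = 0).

Definition level_set (n m : nat) (K : set 'rV[R]_m) (F : 'rV[R]_n -> 'rV[R]_m)
    (x0 : 'rV[R]_n) : set 'rV[R]_n := [set x | leK K (F x) (F x0)].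

Definition ebounded (n : nat) (A : set 'rV[R]_n) :=
  exists M : R, forall x, A x -> enorm x <= M.

Definition cvg_along (n : nat) (x : nat -> 'rV[R]_n) (I : set nat) (xs : 'rV[R]_n) :=
  forall e : R, 0 < e -> exists N, forall k, I k -> (N <= k)%N -> enorm (x k - xs) < e.

Definition cvg_along_R (u : nat -> R) (I : set nat) (a : R) :=
  forall e : R, 0 < e -> exists N, forall k, I k -> (N <= k)%N -> `|u k - a| < e.

Definition K_stationary (n m : nat) (K : set 'rV[R]_m) (F : 'rV[R]_n -> 'rV[R]_m)
    (xs : 'rV[R]_n) :=
  forall d, ~ interior K (- 'd F xs d).

Definition weakly_efficient (n m : nat) (K : set 'rV[R]_m) (F : 'rV[R]_n -> 'rV[R]_m)
    (xs : 'rV[R]_n) :=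
  ~ exists x, ltK K (F x) (F xs).

Definition assumptionA (n m : nat) (K C : set 'rV[R]_m) (l mu : 'rV[R]_m)
    (F : 'rV[R]_n -> 'rV[R]_m) (x0 : 'rV[R]_n) :=
  ebounded (level_set K F x0) /\
  (forall (x : nat -> 'rV[R]_n) (G : nat -> 'rV[R]_n -> 'rV[R]_m)
          (I : set nat) (xs : 'rV[R]_n),
      (forall k, surrogate K C l mu F (x k) (G k)) ->
      (forall k, is_argmin_phi C (G k) (x k.+1)) ->
      infinite_set I ->
      cvg_along x I xs ->
      cvg_along_R (fun k => phiC C (G k (x k.+1))) I 0 ->
      K_stationary K F xs).

Definition diam_level (n m : nat) (K : set 'rV[R]_m) (F : 'rV[R]_n -> 'rV[R]_m)
    (x0 : 'rV[R]_n) : R :=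
  sup [set enorm (x - y) | x in level_set K F x0 & y in level_set K F x0].

Definition u0 (n m : nat) (C : set 'rV[R]_m) (F : 'rV[R]_n -> 'rV[R]_m)
    (x : 'rV[R]_n) : \bar R :=
  ereal_sup [set (inf [set dotv c (F x - F z) | c in C])%:E | z in [set: 'rV[R]_n]].

End Defs.

(* Main.v *)
Require Import Defs.
From HB Require Import structures.
From mathcomp Require Import all_boot all_order all_algebra.
From mathcomp Require Import all_classical all_reals all_analysis.
From mathcomp Require Import ring lra.
Import Order.TTheory GRing.Theory Num.Theory.
Import numFieldNormedType.Exports.
Local Open Scope classical_set_scope.
Local Open Scope ring_scope.

Set Implicit Arguments. Unset Strict Implicit. Unset Printing Implicit Defensive.
Section Aux.
Variable R : realType.

Lemma dotvC p (u v : 'rV[R]_p) : dotv u v = dotv v u.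
Proof. by apply: eq_bigr => i _; rewrite mulrC. Qed.

Lemma dotvDr p (u v w : 'rV[R]_p) : dotv u (v + w) = dotv u v + dotv u w.
Proof. by rewrite /dotv -big_split; apply: eq_bigr => i _; rewrite !mxE mulrDr. Qed.

Lemma dotvZr p (u v : 'rV[R]_p) (t : R) : dotv u (t *: v) = t * dotv u v.
Proof. by rewrite /dotv mulr_sumr; apply: eq_bigr => i _; rewrite !mxE mulrCA. Qed.

Lemma dotvNr p (u v : 'rV[R]_p) : dotv u (- v) = - dotv u v.
Proof. by rewrite -scaleN1r dotvZr mulN1r. Qed.

Lemma dotvBr p (u v w : 'rV[R]_p) : dotv u (v - w) = dotv u v - dotv u w.
Proof. by rewrite dotvDr dotvNr. Qed.

Lemma dotv0r p (u : 'rV[R]_p) : dotv u 0 = 0.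
Proof. by rewrite /dotv big1 // => i _; rewrite mxE mulr0. Qed.

Lemma dotvDl p (u v w : 'rV[R]_p) : dotv (v + w) u = dotv v u + dotv w u.
Proof. by rewrite dotvC dotvDr !(dotvC u). Qed.
Lemma dotvZl p (u v : 'rV[R]_p) (t : R) : dotv (t *: v) u = t * dotv v u.
Proof. by rewrite dotvC dotvZr dotvC. Qed.
Lemma dotvNl p (u v : 'rV[R]_p) : dotv (- v) u = - dotv v u.
Proof. by rewrite dotvC dotvNr dotvC. Qed.
Lemma dotvBl p (u v w : 'rV[R]_p) : dotv (v - w) u = dotv v u - dotv w u.
Proof. by rewrite dotvDl dotvNl. Qed.

Lemma dotv_ge0 p (v : 'rV[R]_p) : 0 <= dotv v v.
Proof. by apply: sumr_ge0 => i _; rewrite -expr2 sqr_ge0. Qed.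

Lemma dotv_eq0 p (v : 'rV[R]_p) : dotv v v = 0 -> v = 0.
Proof.
move=> /eqP; rewrite psumr_eq0; last by move=> i _; rewrite -expr2 sqr_ge0.
move=> /allP H; apply/rowP => i; rewrite mxE.
have := H i (mem_index_enum i); rewrite implyTb -expr2 sqrf_eq0.
by move/eqP.
Qed.

Lemma enorm_sq p (v : 'rV[R]_p) : enorm v ^+ 2 = dotv v v.
Proof. by rewrite /enorm sqr_sqrtr // dotv_ge0. Qed.

Lemma enorm_ge0 p (v : 'rV[R]_p) : 0 <= enorm v.
Proof. exact: sqrtr_ge0. Qed.

Lemma coord_le_enorm p (v : 'rV[R]_p) i : `|v ord0 i| <= enorm v.
Proof.
rewrite -(sqrtr_sqr (v ord0 i)) /enorm ler_sqrt; last exact: dotv_ge0.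
rewrite /dotv (bigD1 i) //= -expr2 lerDl.
by apply: sumr_ge0 => j _; rewrite -expr2 sqr_ge0.
Qed.

Lemma norm_le_enorm p (v : 'rV[R]_p) : `|v| <= enorm v.
Proof.
change (mx_norm v <= enorm v); rewrite mx_normrE; apply/bigmax_leP; split => /=.
  exact: enorm_ge0.
by move=> [i j] _ /=; rewrite (ord1 i); exact: coord_le_enorm.
Qed.

Lemma coord_le_norm p (v : 'rV[R]_p) i : `|v ord0 i| <= `|v|.
Proof.
change (`|v ord0 i| <= mx_norm v); rewrite mx_normrE; apply/bigmax_geP; right => /=.
by exists (ord0, i).
Qed.

Lemma enorm_le_norm p (v : 'rV[R]_p) : enorm v <= p%:R * `|v|.
Proof.
have h : dotv v v <= (p%:R * `|v|) ^+ 2.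
  apply: (@le_trans _ _ (\sum_(i < p) `|v|^+2)).
    apply: ler_sum => i _; rewrite -expr2 -real_normK ?num_real //.
    by rewrite lerXn2r ?nnegrE // coord_le_norm.
  rewrite sumr_const card_ord exprMn -[leLHS]mulr_natl ler_wpM2r ?sqr_ge0 //.
  case: (p) => [|q]; first by rewrite expr0n.
  by rewrite expr2 ler_peMl // ler1n.
rewrite /enorm -(@ger0_norm _ (p%:R * `|v|)) ?mulr_ge0 //.
by rewrite -sqrtr_sqr ler_sqrt ?sqr_ge0.
Qed.

Lemma dotv_cont p (u : 'rV[R]_p) : continuous (dotv u).
Proof.
rewrite /dotv; apply: continuous_big => [|i _]; first by move=> z; apply: cvgD; [exact: cvg_fst | exact: cvg_snd].
  move=> v; exact: (cvgMl_tmp (a:=u ord0 i) (@coord_continuous R 1 p ord0 i v)).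
Qed.


Lemma small_le0 (x q : R) : (forall t : R, 0 < t -> t <= 1 -> x <= t * q) -> x <= 0.
Proof.
move=> H; rewrite leNgt; apply/negP => x0.
have q0 : 0 < q by have := H 1 ltr01 (lexx _); rewrite mul1r => /(lt_le_trans x0).
have t0 : 0 < x / (q + x) by rewrite divr_gt0 // addr_gt0.
have t1 : x / (q + x) <= 1 by rewrite ler_pdivrMr ?addr_gt0 // mul1r lerDr ltW.
have := H _ t0 t1; rewrite mulrAC ler_pdivlMr ?addr_gt0 // => h.
nra.
Qed.

Lemma dotv_expand p (a w : 'rV[R]_p) (t : R) :
  dotv (a + t *: w) (a + t *: w) = dotv a a + 2 * t * dotv a w + t ^+ 2 * dotv w w.
Proof.
rewrite !dotvDr !dotvDl !dotvZr !dotvZl (dotvC w a).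
by rewrite mulr2n mulrDl !mul1r expr2 -!mulrA; ring.
Qed.

Lemma dotv_sq_cont p : continuous (fun v : 'rV[R]_p => dotv v v).
Proof.
rewrite /dotv => v; apply: continuous_big => [|i _]; first by move=> z; apply: cvgD; [exact: cvg_fst | exact: cvg_snd].
move=> w; exact: (cvgM (@coord_continuous R 1 p ord0 i w) (@coord_continuous R 1 p ord0 i w)).
Qed.

Lemma enormZsq p (v : 'rV[R]_p) (s : R) : enorm (s *: v) ^+ 2 = s ^+ 2 * enorm v ^+ 2.
Proof. by rewrite !enorm_sq dotvZl dotvZr mulrA expr2. Qed.

Lemma rballE p (y z : 'rV[R]_p) e : ball y e z = (`|y - z| < e).
Proof. by rewrite mx_norm_ball. Qed.

Section Cone.
Variables (m : nat) (K C : set 'rV[R]_m).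
Hypothesis hK : proper_cone K.
Hypothesis hCc : compact C.
Hypothesis hC0 : ~ C 0.
Hypothesis hcone : cone_of C = dual_cone K.

Lemma C_dual c : C c -> dual_cone K c.
Proof. by move=> Cc; rewrite -hcone; exists 1; split => //; exists c; rewrite ?scale1r. Qed.

Lemma C_ne : exists c, C c.
Proof.
have : dual_cone K 0 by move=> y _; rewrite dotvC dotv0r.
by rewrite -hcone => -[t [_ [c Cc _]]]; exists c.
Qed.

Lemma Kpos c y : C c -> K y -> 0 <= dotv c y.
Proof. by move=> /C_dual; apply. Qed.

Lemma leK_C y z : leK K y z -> forall c, C c -> dotv c y <= dotv c z.
Proof. by move=> H c Cc; rewrite -subr_ge0 -dotvBr; apply: Kpos. Qed.

Lemma phi_att y : exists2 c, C c & forall c', C c' -> dotv c' y <= dotv c y.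
Proof.
have [c0 Cc0] := C_ne.
have := @EVT_max_rV R m (fun c => dotv y c) C (ex_intro _ c0 Cc0) hCc.
case.
  by apply: continuous_subspaceT => c; apply: dotv_cont.
move=> c; rewrite inE => Cc H; exists c => // c' Cc'.
by rewrite !(dotvC _ y); apply: H; rewrite inE.
Qed.

Lemma phi_ub c y : C c -> dotv c y <= phiC C y.
Proof.
move=> Cc; have [c1 Cc1 H] := phi_att y.
apply: ub_le_sup; last by exists c.
by exists (dotv c1 y) => _ [c' Cc' <-]; apply: H.
Qed.

Lemma phi_le y b : (forall c, C c -> dotv c y <= b) -> phiC C y <= b.
Proof.
move=> H; have [c0 Cc0] := C_ne.
by apply: ge_sup; [exists (dotv c0 y), c0 | move=> _ [c Cc <-]; apply: H].
Qed.

Lemma phi_eq y : exists2 c, C c & phiC C y = dotv c y.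
Proof.
have [c Cc H] := phi_att y; exists c => //.
by apply/eqP; rewrite eq_le phi_ub // andbT; apply: phi_le.
Qed.

Lemma phiD y z : phiC C (y + z) <= phiC C y + phiC C z.
Proof. by apply: phi_le => c Cc; rewrite dotvDr lerD // phi_ub. Qed.

Lemma phiZ t y : 0 <= t -> phiC C (t *: y) <= t * phiC C y.
Proof. by move=> t0; apply: phi_le => c Cc; rewrite dotvZr ler_wpM2l // phi_ub. Qed.

Lemma phi_mono y z : (forall c, C c -> dotv c y <= dotv c z) ->
  phiC C y <= phiC C z.
Proof. by move=> H; apply: phi_le => c Cc; apply: le_trans (H c Cc) (phi_ub _ Cc). Qed.

Lemma phi0 : phiC C 0 = 0.
Proof.
apply/eqP; rewrite eq_le; apply/andP; split.
  by apply: phi_le => c _; rewrite dotv0r.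
by have [c Cc] := C_ne; rewrite -(dotv0r c) phi_ub.
Qed.

Lemma K_cl : closed K. Proof. by case: hK. Qed.
Lemma K0 : K 0. Proof. by case: hK => _ []. Qed.
Lemma KZ y t : K y -> 0 <= t -> K (t *: y). Proof. by case: hK => _ [_ [H _]]; apply: H. Qed.
Lemma KD y z : K y -> K z -> K (y + z). Proof. by case: hK => _ [_ [_ [H _]]]; apply: H. Qed.
Lemma Kpt y : K y -> K (- y) -> y = 0. Proof. by case: hK => _ [_ [_ [_ [H _]]]]; apply: H. Qed.

Lemma bipolar y : (forall c, C c -> 0 <= dotv c y) -> K y.
Proof.
move=> Hy.
have [r0|rpos] := eqVneq (enorm y) 0.
  suff -> : y = 0 by exact: K0.
  by apply: dotv_eq0; rewrite -enorm_sq r0 expr0n.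
have rp : 0 < enorm y by rewrite lt_neqAle eq_sym rpos enorm_ge0.
set r := enorm y.
pose g := fun w : 'rV[R]_m => dotv (y - w) (y - w).
pose A := K `&` closed_ball y r.
have A0 : A 0.
  split; first exact: K0.
  rewrite closed_ballE // /closed_ball_ /= subr0; exact: norm_le_enorm.
have Acomp : compact A.
  apply: bounded_closed_compact.
    exists (`|y| + r); split; first exact: num_real.
    move=> M hM z [_]; rewrite closed_ballE // /closed_ball_ /= => hz.
    apply: ltW; apply: le_lt_trans hM.
    rewrite (_ : z = y - (y - z)); last by rewrite opprB addrC subrK.
    by apply: le_trans (ler_normB _ _) _; rewrite lerD2l.
  apply: closedI; first exact: K_cl.
  exact: closed_ball_closed.
have gcont : continuous g.
  move=> w; rewrite /g; apply: (@continuous_comp _ _ _ (fun w : 'rV[R]_m => y - w) (fun v : 'rV[R]_m => dotv v v)).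
    by apply: (@continuousB R _ _ (cst y) id); [exact: cst_continuous | exact: cvg_id].
  exact: dotv_sq_cont.
have [|p pA pmin] := @EVT_min_rV R m g A (ex_intro _ 0 A0) Acomp.
  by apply: continuous_subspaceT.
move: pA; rewrite inE => -[Kp _].
have gmin w : K w -> g p <= g w.
  move=> Kw; have [wA|wA] := pselect (closed_ball y r w).
    by apply: pmin; rewrite inE.
  apply: le_trans (pmin 0 _) _; first by rewrite inE.
  rewrite /g subr0 -!enorm_sq lerXn2r ?nnegrE ?enorm_ge0 //.
  move: wA; rewrite closed_ballE // /closed_ball_ /= => /negP; rewrite -ltNge => /ltW h.
  by apply: le_trans h (norm_le_enorm _).
set a := y - p.
have H1 w : K w -> dotv a w <= 0.
  move=> Kw; apply: (@small_le0 _ (dotv w w)) => t t0 t1.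
  have := gmin (p + t *: w) (KD Kp (KZ Kw (ltW t0))).
  rewrite /g (_ : y - (p + t *: w) = a + (- t) *: w); last by rewrite /a scaleNr opprD addrA.
  rewrite dotv_expand -/a => h.
  have : 0 <= t * (t * dotv w w - 2 * dotv a w) by nra.
  rewrite pmulr_rge0 // subr_ge0 => h2.
  have := dotv_ge0 w; nra.
have H2 : 0 <= dotv a p.
  rewrite -oppr_le0; apply: (@small_le0 _ (dotv p p)) => t t0 t1.
  have := gmin ((1 - t) *: p) (KZ Kp _); rewrite subr_ge0 => /(_ t1).
  rewrite /g (_ : y - (1 - t) *: p = a + t *: p); last by rewrite /a scalerBl scale1r opprB addrCA addrC.
  rewrite dotv_expand -/a => h.
  have : 0 <= t * (t * dotv p p + 2 * dotv a p) by nra.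
  rewrite pmulr_rge0 // => h2.
  have := dotv_ge0 p; nra.
have cdual : dual_cone K (- a) by move=> w Kw; rewrite dotvNl oppr_ge0; apply: H1.
move: cdual; rewrite -hcone => -[s [s0 [c Cc ec]]].
have h3 : 0 <= dotv (- a) y by rewrite ec dotvZl mulr_ge0 // Hy.
have h4 : dotv a y = dotv a a + dotv a p by rewrite -dotvDr /a subrK.
have : dotv a a = 0.
  apply/eqP; rewrite eq_le dotv_ge0 andbT.
  move: h3; rewrite dotvNl h4; nra.
move/dotv_eq0; rewrite /a => /eqP; rewrite subr_eq0 => /eqP ->.
exact: Kp.
Qed.

Lemma ballE' (y z : 'rV[R]_m) e : ball y e z = (`|y - z| < e).
Proof. by rewrite mx_norm_ball. Qed.

Lemma int_addK y k : interior K y -> K k -> interior K (y + k).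
Proof.
move=> /nbhs_ballP [e e0 He] Kk; apply/nbhs_ballP; exists e => // z.
rewrite ballE' => hz.
have -> : z = (z - k) + k by rewrite subrK.
apply: KD => //; apply: He; rewrite ballE'.
by rewrite opprB addrA.
Qed.

Lemma mu_pos mu c : interior K mu -> C c -> 0 < dotv c mu.
Proof.
move=> /nbhs_ballP [e e0 He] Cc.
have cn0 : c != 0 by apply/eqP => c0; apply: hC0; rewrite -c0.
have cc : 0 < dotv c c.
  by rewrite lt_neqAle dotv_ge0 andbT; apply/eqP => /esym/dotv_eq0/eqP; apply/negP.
set d := e / (2 * (`|c| + 1)).
have d0 : 0 < d by rewrite divr_gt0 // mulr_gt0 // ltr_pwDr.
have : K (mu - d *: c).
  apply: He; rewrite ballE' opprB addrC subrK normrZ gtr0_norm //.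
  rewrite /d mulrAC ltr_pdivrMr ?mulr_gt0 ?ltr_pwDr //.
  rewrite ltr_pM2l //; have := normr_ge0 c; lra.
move=> /(Kpos Cc); rewrite dotvBr dotvZr subr_ge0 => h.
by apply: lt_le_trans h; rewrite mulr_gt0.
Qed.

Section Algo.
Variables (n : nat) (F : 'rV[R]_n -> 'rV[R]_m) (l mu : 'rV[R]_m)
  (x : nat -> 'rV[R]_n) (G : nat -> 'rV[R]_n -> 'rV[R]_m).
Hypothesis hl : K l.
Hypothesis hmu : interior K mu.
Hypothesis hlmu : leK K l mu.
Hypothesis hsur : forall k, surrogate K C l mu F (x k) (G k).
Hypothesis hargmin : forall k, is_argmin_phi C (G k) (x k.+1).

Lemma G_xk k : G k (x k) = 0.
Proof. by have [_ [_ [_ [_ [H0 _]]]]] := hsur k; move: H0; rewrite subrK. Qed.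

Lemma G_upper k c : C c -> dotv c (F (x k.+1) - F (x k)) <= dotv c (G k (x k.+1)).
Proof. move=> Cc; have [_ [_ [H _]]] := hsur k; exact: (leK_C (H _ (hargmin k)) Cc). Qed.

Lemma descent k c : C c -> dotv c (F (x k.+1)) <= dotv c (F (x k)).
Proof.
move=> Cc; rewrite -subr_le0 -dotvBr; apply: le_trans (G_upper k Cc) _.
apply: le_trans (phi_ub _ Cc) _; apply: le_trans (hargmin k (x k)) _.
by rewrite G_xk phi0.
Qed.

Lemma step1 k z : phiC C (G k (x k.+1)) <=
  phiC C (G k z - (2^-1 * enorm (z - x k.+1) ^+ 2) *: mu).
Proof.
have [_ [Hs _]] := hsur k.
set xp := x k.+1; set d := z - xp; set E := enorm d ^+ 2.
rewrite -subr_le0; apply: (@small_le0 _ (2^-1 * E * phiC C mu)) => t t0 t1.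
set w := xp + t *: d.
have e1 : xp - w = (- t) *: d by rewrite /w opprD addrA subrr add0r scaleNr.
have e2 : z - w = (1 - t) *: d by rewrite /w opprD addrA scalerBl scale1r.
set L := 'd (G k) w.
have hw : phiC C (G k w) <= (1 - t) * phiC C (G k xp)
    + t * phiC C (G k z - (2^-1 * ((1 - t) * E)) *: mu).
  apply: phi_le => c Cc.
  have S1 := leK_C (Hs w xp) Cc; have S2 := leK_C (Hs w z) Cc.
  rewrite e1 in S1; rewrite e2 in S2.
  rewrite !enormZsq -/E !linearZZ !dotvDr !dotvZr !dotvNr in S1 S2.
  have P1 := phi_ub (G k xp) Cc.
  have P2 := phi_ub (G k z - (2^-1 * ((1 - t) * E)) *: mu) Cc.
  rewrite dotvBr dotvZr in P2.
  have hmc : 0 <= dotv c mu by apply: Kpos => //; apply: interior_subset.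
  have t1' : 0 <= 1 - t by rewrite subr_ge0.
  have Q1 := ler_wpM2l t1' P1; have Q2 := ler_wpM2l (ltW t0) P2.
  have M1 := ler_wpM2l t1' S1; have M2 := ler_wpM2l (ltW t0) S2.
  lra.
have := hargmin k w; rewrite -/xp => hm.
have hV : phiC C (G k z - (2^-1 * ((1 - t) * E)) *: mu) <=
    phiC C (G k z - (2^-1 * E) *: mu) + t * (2^-1 * E * phiC C mu).
  have -> : G k z - (2^-1 * ((1 - t) * E)) *: mu =
     (G k z - (2^-1 * E) *: mu) + (2^-1 * E * t) *: mu.
    by rewrite mulrBl mul1r mulrBr scalerBl opprB addrA addrAC (mulrC t E) (mulrA _ E t).
  apply: le_trans (phiD _ _) _; rewrite lerD2l mulrC.
  have E0 : 0 <= E by rewrite /E sqr_ge0.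
  have h0 : 0 <= t * (2^-1 * E) by apply: mulr_ge0; [exact: ltW | apply: mulr_ge0 => //; rewrite invr_ge0 ler0n].
  apply: le_trans (phiZ _ h0) _; lra.
have := le_trans hm hw => h.
nra.
Qed.

Lemma step2 k z c : C c -> dotv c (G k z) <=
  dotv c (F z - F (x k)) + (2^-1 * enorm (z - x k) ^+ 2) * dotv c l.
Proof.
move=> Cc; have [_ [_ [_ [Hsm [H0 dH0]]]]] := hsur k.
have := leK_C (Hsm (x k) z) Cc; rewrite /= dH0 H0 subr0 add0r.
rewrite !dotvZr !dotvDr !dotvNr; lra.
Qed.

Lemma KEY k z : phiC C (F (x k.+1) - F (x k)) <=
  phiC C (F z - F (x k) + (2^-1 * enorm (z - x k) ^+ 2) *: l
          - (2^-1 * enorm (z - x k.+1) ^+ 2) *: mu).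
Proof.
have h1 : phiC C (F (x k.+1) - F (x k)) <= phiC C (G k (x k.+1)).
  by apply: phi_mono => c Cc; apply: G_upper.
apply: le_trans h1 (le_trans (step1 k z) _).
apply: phi_mono => c Cc.
rewrite !dotvBr dotvDr !dotvZr.
have := step2 k z Cc; rewrite dotvBr; lra.
Qed.

Lemma FEJ k z s : (forall c, C c -> s <= dotv c (F (x k.+1) - F z)) -> 0 <= s ->
  enorm (z - x k.+1) <= enorm (z - x k) /\
  s <= (2^-1 * enorm (z - x k) ^+ 2 - 2^-1 * enorm (z - x k.+1) ^+ 2) * phiC C l.
Proof.
move=> Hs s0.
have hKEY := KEY k z.
set q := 2^-1 * enorm (z - x k) ^+ 2 in hKEY *.
set q1 := 2^-1 * enorm (z - x k.+1) ^+ 2 in hKEY *.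
set D := F z - F (x k) in hKEY.
set V := q *: l - q1 *: mu.
have eV : D + q *: l - q1 *: mu = D + V by rewrite /V addrA.
rewrite eV in hKEY.
have h1 : phiC C D <= phiC C (F (x k.+1) - F (x k)) - s.
  apply: phi_le => c Cc.
  have := phi_ub (F (x k.+1) - F (x k)) Cc; have := Hs c Cc.
  rewrite /D !dotvBr; lra.
have hsV : s <= phiC C V by have := phiD D V; lra.
have q0 : 0 <= q by rewrite /q mulr_ge0 ?invr_ge0 ?ler0n ?sqr_ge0.
have q10 : 0 <= q1 by rewrite /q1 mulr_ge0 ?invr_ge0 ?ler0n ?sqr_ge0.
have [c Cc ec] := phi_eq V.
have cl0 := Kpos Cc hl.
have clm := leK_C hlmu Cc.
have cm0 := mu_pos hmu Cc.
have qq : q1 <= q.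
  move: hsV; rewrite ec /V dotvBr !dotvZr => h.
  have : q1 * dotv c mu <= q * dotv c mu.
    by apply: le_trans (_ : q1 * dotv c mu <= q * dotv c l) _; [lra | rewrite ler_wpM2l].
  by rewrite ler_pM2r.
split.
  move: qq; rewrite /q /q1 => qq; have := enorm_ge0 (z - x k.+1); have := enorm_ge0 (z - x k); nra.
apply: le_trans hsV _.
apply: le_trans (_ : phiC C V <= phiC C ((q - q1) *: l)) _.
  apply: phi_mono => c' Cc'; rewrite /V dotvBr !dotvZr.
  have := leK_C hlmu Cc'; have := Kpos Cc' hl; nra.
by apply: phiZ; rewrite subr_ge0.
Qed.

Lemma descent_le j k c : (j <= k)%N -> C c -> dotv c (F (x k)) <= dotv c (F (x j)).
Proof.
move=> jk Cc; elim: k jk => [|k IH]; first by rewrite leqn0 => /eqP ->.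
rewrite leq_eqVlt => /orP[/eqP -> //|]; rewrite ltnS => /IH.
exact: le_trans (descent k Cc).
Qed.

Lemma in_level k : level_set K F (x 0) (x k).
Proof.
apply: bipolar => c Cc; rewrite dotvBr subr_ge0; exact: descent_le.
Qed.

Hypothesis hbnd : ebounded (level_set K F (x 0)).

Lemma enormN p (v : 'rV[R]_p) : enorm (- v) = enorm v.
Proof. by rewrite /enorm dotvNl dotvNr opprK. Qed.

Lemma diam_ub a b : level_set K F (x 0) a -> level_set K F (x 0) b ->
  enorm (a - b) <= diam_level K F (x 0).
Proof.
move=> La Lb; apply: ub_le_sup; last by exists a => //; exists b.
have [M HM] := hbnd.
exists (n%:R * (M + M)) => _ [a' La' [b' Lb' <-]].
apply: le_trans (enorm_le_norm _) _; rewrite ler_wpM2l //.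
apply: le_trans (ler_normB _ _) _.
apply: lerD; apply: le_trans (norm_le_enorm _) _; exact: HM.
Qed.

Lemma diam_ge0 : 0 <= diam_level K F (x 0).
Proof.
by apply: le_trans (diam_ub (in_level 0) (in_level 0)); exact: enorm_ge0.
Qed.

Lemma phil_ge0 : 0 <= phiC C l.
Proof. by have [c Cc] := C_ne; apply: le_trans (phi_ub _ Cc); exact: Kpos. Qed.

Lemma sum_step k z s : (forall j, (j < k)%N -> forall c, C c ->
     s <= dotv c (F (x j.+1) - F z)) -> 0 <= s ->
  k%:R * s <= (2^-1 * enorm (z - x 0) ^+ 2 - 2^-1 * enorm (z - x k) ^+ 2) * phiC C l.
Proof.
move=> H s0; elim: k H => [|k IH] H; first by rewrite mul0r subrr mul0r.
have [_ h] := FEJ (H k (ltnSn k)) s0.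
have := IH (fun j jk => H j (ltnW jk)).
have e : (k.+1)%:R = k%:R + 1 :> R by rewrite -addn1 natrD.
rewrite e; lra.
Qed.

Lemma RATE k : (1 <= k)%N ->
  (u0 C F (x k) <= ((phiC C l * diam_level K F (x 0) ^+ 2) / (2 * k%:R))%:E)%E.
Proof.
move=> k1; apply: ge_ereal_sup => _ [z _ <-]; rewrite lee_fin.
set S := [set dotv c (F (x k) - F z) | c in C].
set B := (phiC C l * diam_level K F (x 0) ^+ 2) / (2 * k%:R).
have kpos : 0 < k%:R :> R by rewrite ltr0n.
have B0 : 0 <= B.
  apply: divr_ge0; first by apply: mulr_ge0; [exact: phil_ge0 | exact: sqr_ge0].
  by apply: mulr_ge0; [exact: ler0n | exact: ltW].
have [s0|spos] := lerP (inf S) 0; first exact: le_trans s0 B0.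
have hlb : forall c, C c -> inf S <= dotv c (F (x k) - F z).
  move=> c Cc; apply: ge_inf; last by exists c.
  exists (- phiC C (- (F (x k) - F z))) => _ [c' Cc' <-].
  by rewrite lerNl -dotvNr; apply: phi_ub.
set s := inf S in spos hlb *.
have H j : (j < k)%N -> forall c, C c -> s <= dotv c (F (x j.+1) - F z).
  move=> jk c Cc; apply: le_trans (hlb c Cc) _; rewrite !dotvBr lerD2r.
  exact: descent_le.
have := sum_step H (ltW spos).
have Lz : level_set K F (x 0) z.
  apply: bipolar => c Cc; apply: le_trans (ltW spos) _.
  apply: le_trans (hlb c Cc) _; rewrite !dotvBr lerD2r; exact: descent_le.
have hd := diam_ub Lz (in_level 0).
have hd2 : enorm (z - x 0) ^+ 2 <= diam_level K F (x 0) ^+ 2.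
  by rewrite lerXn2r ?nnegrE ?enorm_ge0 ?diam_ge0.
have := phil_ge0; have := sqr_ge0 (enorm (z - x k)).
rewrite /B ler_pdivlMr ?mulr_gt0 ?ltr0n //.
move: hd2; set D := diam_level K F (x 0) ^+ 2; set e0 := enorm (z - x 0) ^+ 2.
set ek := enorm (z - x k) ^+ 2; set pl := phiC C l.
nra.
Qed.

Lemma xbnd : exists M : R, 0 < M /\ forall k, `|x k| <= M.
Proof.
have [M0 HM] := hbnd; exists (`|M0| + 1); split; first by rewrite ltr_pwDr.
move=> k; apply: le_trans (norm_le_enorm _) _; apply: le_trans (HM _ (in_level k)) _.
by apply: le_trans (ler_norm _) _; rewrite lerDl.
Qed.

Lemma clus : exists p, cluster (x @ \oo) p.
Proof.
have [M [M0 HM]] := xbnd.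
pose A := closed_ball (0 : 'rV[R]_n) M.
have Acomp : compact A.
  apply: bounded_closed_compact; last exact: closed_ball_closed.
  exists M; split; first exact: num_real.
  move=> M' hM' z; rewrite /A closed_ballE // /closed_ball_ /= sub0r normrN => hz.
  by apply: ltW; apply: le_lt_trans hM'.
have [|p [_ cp]] := Acomp (x @ \oo) _.
  exists 0%N => // k _; rewrite /A closed_ballE // /closed_ball_ /= sub0r normrN.
  exact: HM.
by exists p.
Qed.

Lemma clus_real p : cluster (x @ \oo) p ->
  cluster ((fun k => enorm (x k - p)) @ \oo) 0.
Proof.
move=> cp; apply/cluster_eventuallyP => e N e0.
set d := e / (n%:R + 1).
have d0 : 0 < d by rewrite divr_gt0 // ltr_pwDr.
have hA : (x @ \oo) (x @` [set j | (N <= j)%N]) by exists N => // k hk; exists k.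
have [y [[j hj <-] hb]] := cp _ _ hA (nbhsx_ballx p d d0).
exists j => //; rewrite sub0r normrN ger0_norm ?enorm_ge0 //.
move: hb; rewrite rballE => hb.
apply: le_trans (enorm_le_norm _) _.
rewrite -normrN opprB.
have : n%:R * `|p - x j| <= n%:R * d by rewrite ler_wpM2l // ltW.
move/le_trans; apply.
rewrite /d mulrA ler_pdivrMr ?ltr_pwDr //; lra.
Qed.

Hypothesis hF : forall z, differentiable F z.
Hypothesis hconv : K_convex K F.
Hypothesis hA : assumptionA K C l mu F (x 0).

Lemma conv_main : exists xs, x @ \oo --> xs /\ weakly_efficient K F xs.
Proof.
have [p cp] := clus.
have [f finc fcv] := (cluster_eventually_cvg _ _).1 (clus_real cp).
have en j : enorm (x (f j) - p) = enorm (p - x (f j)) by rewrite -enormN opprB.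
have xf : (x \o f) @ \oo --> p.
  apply/cvgrPdist_lt => e e0; move/cvgrPdist_lt : fcv => /(_ e e0).
  apply: filterS => j /=; rewrite sub0r normrN ger0_norm ?enorm_ge0 // => h.
  by apply: le_lt_trans (norm_le_enorm _) _; rewrite -en.
have fge j : (j <= f j)%N.
  elim: j => [//|j IH]; apply: leq_ltn_trans IH _.
  by rewrite ltnNge -leEnat finc ltnn.
have wlim c : C c -> (fun j => dotv c (F (x (f j)))) @ \oo --> dotv c (F p).
  move=> Cc.
  have hc : {for p, continuous (fun y => dotv c (F y))}.
    apply: (@continuous_comp _ _ _ F (dotv c)).
      exact: differentiable_continuous.
    exact: dotv_cont.
  exact: (cvg_comp _ _ xf hc).
have Lb c k : C c -> dotv c (F p) <= dotv c (F (x k)).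
  move=> Cc; rewrite leNgt; apply/negP => hlt.
  have d0 : 0 < dotv c (F p) - dotv c (F (x k)) by rewrite subr_gt0.
  have := wlim c Cc; move/cvgrPdist_lt => /(_ _ d0) [N _ HN].
  have h := HN (maxn N k) (leq_maxl _ _).
  have := descent_le (leq_trans (leq_maxr N k) (fge _)) Cc.
  move: h; set w := dotv c (F (x (f (maxn N k)))) => h1 h2.
  have := ler_norm (dotv c (F p) - w); lra.
have stat : K_stationary K F p.
  have [_ hA2] := hA; apply: (hA2 x G (range f) p hsur hargmin).
  - move=> fin; apply: infinite_nat.
    have := @finite_preimage _ _ (range f) f _ fin; rewrite preimage_range; apply.
    by move=> a b _ _; apply: increasing_seq_injective.
  - move=> e e0; move/cvgrPdist_lt: fcv => /(_ e e0) [N _ HN].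
    exists (f N) => _ [j _ <-] hj.
    have /HN : (N <= j)%N by rewrite -finc.
    by rewrite /= sub0r normrN ger0_norm ?enorm_ge0.
  - move=> e e0; have [c0 Cc0] := C_ne.
    move/cvgrPdist_lt: (wlim c0 Cc0) => /(_ e e0) [N _ HN].
    exists (f N) => k _ hk.
    have up : phiC C (G k (x k.+1)) <= 0.
      by have := hargmin k (x k); rewrite G_xk phi0.
    have lo := le_trans (G_upper k Cc0) (phi_ub _ Cc0).
    have h1 := HN N (leqnn N).
    have h2 := descent_le hk Cc0.
    have h3 := Lb c0 k.+1 Cc0.
    move: lo h1 h2 h3 up; rewrite dotvBr /=.
    set L := dotv c0 (F p); set a := dotv c0 (F (x (f N))).
    set ph := phiC C (G k (x k.+1)) => lo h1 h2 h3 up.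
    have := ler_norm (L - a); rewrite subr0 ltr_norml; move: h1; rewrite distrC => h1.
    have := ler_norm (a - L); lra.
have wef : weakly_efficient K F p.
  move=> [z hz]; apply: (stat (z - p)).
  have hc := hconv p z.
  have -> : - 'd F p (z - p) = (F p - F z) + ((F z - F p) - 'd F p (z - p)).
    have e0 : (F p - F z) + (F z - F p) = 0 by rewrite addrC addrA subrK subrr.
    by rewrite addrA e0 add0r.
  exact: int_addK.
have fej k : enorm (p - x k.+1) <= enorm (p - x k).
  have H0 : forall c, C c -> 0 <= dotv c (F (x k.+1) - F p).
    by move=> c Cc; rewrite dotvBr subr_ge0; apply: Lb.
  by have [h _] := FEJ H0 (lexx 0).
have mono j k : (j <= k)%N -> enorm (p - x k) <= enorm (p - x j).
  elim: k => [|k IH]; first by rewrite leqn0 => /eqP ->.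
  rewrite leq_eqVlt => /orP[/eqP -> //|]; rewrite ltnS => /IH.
  exact: le_trans (fej k).
exists p; split => //.
apply/cvgrPdist_lt => e e0; move/cvgrPdist_lt: fcv => /(_ e e0) [N _ HN].
exists (f N) => // k hk /=.
apply: le_lt_trans (norm_le_enorm _) _; apply: le_lt_trans (mono _ _ hk) _.
have := HN N (leqnn N); rewrite /= sub0r normrN ger0_norm ?enorm_ge0 //.
by rewrite en.
Qed.

End Algo.

End Cone.
End Aux.

Unset Implicit Arguments. Set Strict Implicit. Set Printing Implicit Defensive.

Theorem theorem2 (R : realType) (n m : nat)
    (K C : set 'rV[R]_m) (F : 'rV[R]_n -> 'rV[R]_m) (l mu : 'rV[R]_m)
    (x : nat -> 'rV[R]_n) (G : nat -> 'rV[R]_n -> 'rV[R]_m) :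
  proper_cone K ->
  compact C -> convexS C -> ~ C 0 -> cone_of C = dual_cone K ->
  (forall z, differentiable F z) ->
  K l -> interior K mu -> leK K l mu ->
  assumptionA K C l mu F (x 0%N) ->
  K_convex K F ->
  (forall k, surrogate K C l mu F (x k) (G k)) ->
  (forall k, is_argmin_phi C (G k) (x k.+1)) ->
  (forall k, x k.+1 <> x k) ->
  (exists xs, x @ \oo --> xs /\ weakly_efficient K F xs) /\
  (forall k : nat, (1 <= k)%N ->
     (u0 C F (x k) <=
      ((phiC C l * diam_level K F (x 0%N) ^+ 2) / (2 * k%:R))%:E)%E).
Proof.
move=> hK hCc hconvC hC0 hcone hF hl hmu hlmu hA hconv hsur hargmin hneq.
have hbnd := hA.1.
split.
  exact: (conv_main hK hCc hC0 hcone hl hmu hlmu hsur hargmin hbnd hF hconv hA).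
by move=> k k1; exact: (RATE hK hCc hC0 hcone hl hmu hlmu hsur hargmin hbnd k1).
Qed.
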